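(* Let $H\in\mathbb{R}^{n\times d}$ have rank $h$, $\Sigma\in\mathbb{R}^{n\times n}$ symmetric positive definite, and let $\Gamma_i$ be the empirical covariances of deterministic EKI iterates $v_{i+1}^{(j)}=v_i^{(j)}+\Gamma_iH^\top(H\Gamma_iH^\top+\Sigma)^{-1}(y-Hv_i^{(j)})$. Fix $i\ge0$, and let $w_1,\dots,w_n$ and $r$ be as in the context, with $H\Gamma_iH^\top w_\ell=\delta_{\ell,i}\Sigma w_\ell$. For $\ell=1,\dots,r$ let $u_\ell=\frac1{\delta_{\ell,i}}\Gamma_iH^\top w_\ell$, and if $h>r$, for $\ell=r+1,\dots,h$ let $u_\ell=H^+\Sigma w_\ell$. Then for all $\ell\le h$, $u_\ell$ is an eigenvector of $\Gamma_iH^\top\Sigma^{-1}H$ with eigenvalue $\delta_{\ell,i}$, i.e. $\Gamma_iH^\top\Sigma^{-1}Hu_\ell=\delta_{\ell,i}u_\ell$, and conversely $w_\ell=\Sigma^{-1}Hu_\ell$ for all $\ell\le h$.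
   Context: $H^+=(H^\top\Sigma^{-1}H)^\dagger H^\top\Sigma^{-1}$ with $\dagger$ the Moore–Penrose pseudoinverse. Empirical covariance $\Gamma_i=\frac1{J-1}\sum_j(v_i^{(j)}-\bar v_i)(v_i^{(j)}-\bar v_i)^\top$. $r$ is the number of positive eigenvalues of the pencil $(H\Gamma_iH^\top,\Sigma)$, and $w_1,\dots,w_n$ is a $\Sigma$-orthogonal basis of $\mathbb{R}^n$ of generalized eigenvectors of this pencil with: $w_1,\dots,w_r\in\mathsf{Ran}(\Sigma^{-1}H)$ having positive eigenvalues; $w_{r+1},\dots,w_h\in\mathsf{Ran}(\Sigma^{-1}H)$ having eigenvalue zero; $w_{h+1},\dots,w_n$ a basis of $\mathsf{Ker}(H^\top)$. *)

(* Defs.v *)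
From HB Require Import structures.
From mathcomp Require Import all_boot all_order all_algebra.
Set Implicit Arguments. Unset Strict Implicit. Unset Printing Implicit Defensive.
Import Order.TTheory GRing.Theory Num.Theory.
Local Open Scope ring_scope.

Section EKI.
Variables (R : realFieldType) (n d J : nat).

Definition ens_mean (v : 'I_J -> 'cV[R]_d) : 'cV[R]_d :=
  (J%:R)^-1 *: \sum_(j < J) v j.

Definition ens_cov (v : 'I_J -> 'cV[R]_d) : 'M[R]_d :=
  ((J.-1)%:R)^-1 *: \sum_(j < J) ((v j - ens_mean v) *m (v j - ens_mean v)^T).

Definition eki_step (H : 'M[R]_(n, d)) (Sigma : 'M[R]_n) (y : 'cV[R]_n)
    (v : 'I_J -> 'cV[R]_d) : 'I_J -> 'cV[R]_d :=
  fun j => v j + ens_cov v *m H^T *m invmx (H *m ens_cov v *m H^T + Sigma)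
                 *m (y - H *m v j).

Definition eki_iter (H : 'M[R]_(n, d)) (Sigma : 'M[R]_n) (y : 'cV[R]_n)
    (v0 : 'I_J -> 'cV[R]_d) (i : nat) : 'I_J -> 'cV[R]_d :=
  iter i (eki_step H Sigma y) v0.

End EKI.

Definition spd (R : realFieldType) (m : nat) (S : 'M[R]_m) : Prop :=
  S^T = S /\ forall x : 'cV[R]_m, x != 0 -> 0 < (x^T *m S *m x) 0 0.

Definition is_MP_pinv (R : realFieldType) (m k : nat)
    (A : 'M[R]_(m, k)) (X : 'M[R]_(k, m)) : Prop :=
  [/\ A *m X *m A = A, X *m A *m X = X,
      (A *m X)^T = A *m X & (X *m A)^T = X *m A].

(* Main.v *)
Require Import Defs.
From HB Require Import structures.
From mathcomp Require Import all_boot all_order all_algebra.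
Import Order.TTheory GRing.Theory Num.Theory.
Local Open Scope ring_scope.
Lemma spd_unit (R : realFieldType) m (S : 'M[R]_m) : spd S -> S \in unitmx.
Proof.
move=> [sT pos]; rewrite unitmxE unitfE; apply/negP => /det0P [v vn0 vS].
have := pos v^T; rewrite trmx_eq0 => /(_ vn0).
by rewrite trmxK vS mul0mx mxE ltxx.
Qed.

Lemma spd_inv0 (R : realFieldType) m (S : 'M[R]_m) : spd S ->
  forall z : 'cV_m, z^T *m invmx S *m z = 0 -> z = 0.
Proof.
move=> hS z hz; have U := spd_unit _ _ _ hS; case: hS => hT hP.
pose yv := invmx S *m z.
have zE : z = S *m yv by rewrite /yv mulmxA mulmxV // mul1mx.
have e : z^T *m invmx S *m z = yv^T *m S *m yv.
  by rewrite -mulmxA -/yv {1}zE trmx_mul hT.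
case: (eqVneq yv 0) => [y0|yn0]; first by rewrite zE y0 mulmx0.
by have := hP _ yn0; rewrite -e hz mxE ltxx.
Qed.

Lemma cov_psd (R : realFieldType) d J (v : 'I_J -> 'cV[R]_d) (x : 'cV_d) :
  x^T *m ens_cov v *m x = 0 -> ens_cov v *m x = 0.
Proof.
rewrite /ens_cov; set c := _^-1.
pose s j := ((v j - ens_mean v)^T *m x) 0 0.
have hGx : (c *: \sum_j ((v j - ens_mean v) *m (v j - ens_mean v)^T)) *m x
    = c *: \sum_j (s j *: (v j - ens_mean v)).
  rewrite -scalemxAl mulmx_suml; congr (_ *: _); apply: eq_bigr => j _.
  by rewrite -mulmxA {1}[(_ ^T *m x)]mx11_scalar mul_mx_scalar.
rewrite -mulmxA hGx => hq.
have hq' : c * \sum_j s j ^+ 2 = 0.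
  have := congr1 (fun M : 'M_1 => M 0 0) hq.
  rewrite -scalemxAr mulmx_sumr mxE summxE /= mxE => e; apply: etrans e.
  congr (_ * _); apply: eq_bigr => j _.
  rewrite -scalemxAr mxE expr2 /s; congr (_ * _).
  by rewrite !mxE; apply: eq_bigr => k _; rewrite !mxE mulrC.
have c0 : 0 <= c by rewrite /c invr_ge0 ler0n.
case: (eqVneq c 0) => [->|cn0]; first by rewrite scale0r.
have hs : \sum_j s j ^+ 2 = 0 by move: hq' => /eqP; rewrite mulf_eq0 (negbTE cn0) => /eqP.
have sj0 j : s j = 0.
  have := psumr_eq0P (fun j _ => sqr_ge0 (s j)) hs (i:=j) isT.
  by move/eqP; rewrite sqrf_eq0 => /eqP.
by rewrite (eq_bigr (fun _ => 0)) ?big1 ?scaler0 // => j _; rewrite sj0 scale0r.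
Qed.

Lemma mulmxZ (R : realFieldType) m k p (A : 'M[R]_(m,k)) (a:R) (B : 'M[R]_(k,p)) :
  A *m (a *: B) = a *: (A *m B).
Proof. by rewrite scalemxAr. Qed.

Lemma invK (R : realFieldType) m p (S : 'M[R]_m) (B : 'M[R]_(m,p)) :
  S \in unitmx -> invmx S *m (S *m B) = B.
Proof. by move=> U; rewrite mulmxA mulVmx // mul1mx. Qed.

Lemma mA (R : realFieldType) m1 m2 m3 m4 (A : 'M[R]_(m1,m2)) (B : 'M[R]_(m2,m3)) (C : 'M[R]_(m3,m4)) :
  A *m (B *m C) = A *m B *m C.
Proof. exact: mulmxA. Qed.
Arguments mA {R m1 m2 m3 m4}.

Theorem proposition3p13 (R : realFieldType) (n d J h r : nat)
  (H : 'M[R]_(n, d)) (Sigma : 'M[R]_n) (y : 'cV[R]_n)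
  (v0 : 'I_J -> 'cV[R]_d) (i : nat)
  (P : 'M[R]_d) (* the Moore--Penrose pseudoinverse of H^T Sigma^{-1} H *)
  (w : 'I_n -> 'cV[R]_n) (delta : 'I_n -> R) :
  \rank H = h ->
  spd Sigma ->
  is_MP_pinv (H^T *m invmx Sigma *m H) P ->
  let Gamma := ens_cov (eki_iter H Sigma y v0 i) in
  let Hplus := P *m H^T *m invmx Sigma in
  (* generalized eigenvectors of the pencil (H Gamma H^T, Sigma) *)
  (forall l, H *m Gamma *m H^T *m w l = delta l *: (Sigma *m w l)) ->
  (* Sigma-orthogonal basis of R^n *)
  (forall k l, k != l -> (w k)^T *m Sigma *m w l = 0) ->
  (forall c : 'I_n -> R, \sum_(l < n) c l *: w l = 0 -> forall l, c l = 0) ->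
  (r <= h)%N ->
  (forall l : 'I_n, (l < r)%N ->
     0 < delta l /\ exists z : 'cV[R]_d, w l = invmx Sigma *m H *m z) ->
  (forall l : 'I_n, (r <= l < h)%N ->
     delta l = 0 /\ exists z : 'cV[R]_d, w l = invmx Sigma *m H *m z) ->
  (forall l : 'I_n, (h <= l)%N -> H^T *m w l = 0) ->
  (forall x : 'cV[R]_n, H^T *m x = 0 ->
     exists c : 'I_n -> R, x = \sum_(l < n | (h <= l)%N) c l *: w l) ->
  let u := fun l : 'I_n =>
    if (l < r)%N then (delta l)^-1 *: (Gamma *m H^T *m w l)
    else Hplus *m Sigma *m w l in
  forall l : 'I_n, (l < h)%N ->
    Gamma *m H^T *m invmx Sigma *m H *m u l = delta l *: u l /\
    w l = invmx Sigma *m H *m u l.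
Proof.
move=> _ hS hP Gamma Hplus heig _ _ _ hr hrh _ _ u l lh.
have U := spd_unit _ _ _ hS.
have GE : Gamma = ens_cov (eki_iter H Sigma y v0 i) by [].
have HpE : Hplus = P *m H^T *m invmx Sigma by [].
rewrite /u; clearbody Gamma Hplus; clear u.
have SS : invmx Sigma *m Sigma = 1%:M by rewrite mulVmx.
case: ifP => lr.
  have [dpos _] := hr l lr.
  have dn0 : delta l != 0 by rewrite gt_eqF.
  have e2 : invmx Sigma *m H *m ((delta l)^-1 *: (Gamma *m H^T *m w l)) = w l.
    rewrite mulmxZ.
    have -> : invmx Sigma *m H *m (Gamma *m H^T *m w l) = invmx Sigma *m (H *m Gamma *m H^T *m w l) by rewrite !mulmxA.
    by rewrite heig mulmxZ invK // scalerA mulVf // scale1r.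
  split=> //.
  have -> : forall x : 'cV[R]_d, Gamma *m H^T *m invmx Sigma *m H *m x = Gamma *m H^T *m (invmx Sigma *m H *m x) by move=> x; rewrite !mA.
  rewrite e2.
  by rewrite scalerA mulfV // scale1r.
have hl : (r <= l < h)%N by rewrite leqNgt lr lh.
have [d0 [z wz]] := hrh l hl.
case: hP => APA _ _ _.
set A := H^T *m invmx Sigma *m H in APA.
rewrite HpE d0 scale0r.
have uE : P *m H^T *m invmx Sigma *m Sigma *m w l = P *m A *m z.
  by rewrite -(mA (P *m H^T) (invmx Sigma) Sigma) SS mulmx1 wz /A !mA.
have He : H *m (P *m A *m z) = H *m z.
  apply/eqP; rewrite -subr_eq0 -mulmxBr; apply/eqP.
  apply: (spd_inv0 _ _ _ hS).
  set e := P *m A *m z - z.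
  have Ae : A *m e = 0.
  by rewrite /e mulmxBr (mA A (P *m A) z) (mA A P A) APA subrr.
  rewrite trmx_mul.
  have -> : e^T *m H^T *m invmx Sigma *m (H *m e) = e^T *m (A *m e) by rewrite /A !mA.
  by rewrite Ae mulmx0.
have e2 : invmx Sigma *m H *m (P *m A *m z) = w l.
  by rewrite -(mA (invmx Sigma)) He mA -wz.
rewrite uE; split; last by rewrite e2.
rewrite -(mA (Gamma *m H^T *m invmx Sigma)) -(mA (Gamma *m H^T)) (mA (invmx Sigma)) e2.
rewrite -(mA Gamma) GE; apply: cov_psd; rewrite -GE trmx_mul trmxK.
have -> : (w l)^T *m H *m Gamma *m (H^T *m w l) = (w l)^T *m (H *m Gamma *m H^T *m w l) by rewrite !mA.
by rewrite heig d0 scale0r mulmx0.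
Qed.
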